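(* Let $A=A^T\in\mathbb{R}^{n\times n}$, let $s$ be an integer with $1\leq s<d(A)$, and let $v_0\in\mathbb{R}^n$ with $\|v_0\|=1$ and $d(A,v_0)=s+1$. Consider the iteration $\widetilde v_{k+1}=P_s(A;v_k)v_k$, $v_{k+1}=\widetilde v_{k+1}/\|\widetilde v_{k+1}\|$, $k=0,1,2,\dots$. Then $v_0=v_2=v_4=\cdots$.
   Context: $d(A)$ is the degree of the minimal polynomial of $A$; $d(A,v)$ is the grade of $v$ w.r.t. $A$ (degree of the monic polynomial $p$ of smallest degree with $p(A)v=0$); $\mathcal{K}_k(A,v)=\mathrm{span}\{v,Av,\dots,A^{k-1}v\}$; $\mathcal{M}_s$ is the set of real monic polynomials of degree $s$; $\|\cdot\|$ is the Euclidean norm. For $v$ with $d(A,v)\geq s$, $P_s(\cdot\,;v)\in\mathcal{M}_s$ denotes the unique monic polynomial of degree $s$ such that $P_s(A;v)v\perp\mathcal{K}_s(A,v)$. (Under the hypotheses all $\widetilde v_k$ are nonzero.) *)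

(* Defs.v *)
From HB Require Import structures.
From mathcomp Require Import all_boot all_order all_algebra.
From mathcomp Require Import boolp classical_sets.
From mathcomp Require Import reals.
Set Implicit Arguments. Unset Strict Implicit. Unset Printing Implicit Defensive.
Import Order.TTheory GRing.Theory Num.Theory.
Local Open Scope ring_scope.

Section Defs.
Variables (R : realType) (n : nat).
Implicit Types (A : 'M[R]_n) (p : {poly R}) (u v w : 'cV[R]_n).

Definition polymx A p : 'M[R]_n := \sum_(i < size p) p`_i *: A ^+ i.
Definition polyapp A p v : 'cV[R]_n := \sum_(i < size p) p`_i *: (A ^+ i *m v).
Definition dotv u w : R := \sum_(i < n) u i 0 * w i 0.
Definition normv v : R := Num.sqrt (dotv v v).

Definition is_minpoly_deg A (d : nat) : Prop :=
  (exists p, p \is monic /\ size p = d.+1 /\ polymx A p = 0) /\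
  (forall p, p \is monic -> polymx A p = 0 -> (d.+1 <= size p)%N).

Definition is_grade A v (d : nat) : Prop :=
  (exists p, p \is monic /\ size p = d.+1 /\ polyapp A p v = 0) /\
  (forall p, p \is monic -> polyapp A p v = 0 -> (d.+1 <= size p)%N).

(* Krylov space K_k(A,v): the row space of the matrix with rows (A^i v)^T, i < k *)
Definition krylov A (k : nat) v : 'M[R]_(k, n) := \matrix_(i < k) (A ^+ i *m v)^T.

Definition is_Ps A (s : nat) v p : Prop :=
  p \is monic /\ size p = s.+1 /\
  forall w, (w^T <= krylov A s v)%MS -> dotv w (polyapp A p v) = 0.

Definition Ps A (s : nat) v : {poly R} := xget 0 [set p | is_Ps A s v p].

Fixpoint iterv A (s : nat) v0 (k : nat) : 'cV[R]_n :=
  match k with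
  | 0 => v0
  | k'.+1 => let u := iterv A s v0 k' in
             let t := polyapp A (Ps A s u) u in
             (normv t)^-1 *: t
  end.
End Defs.

(* Main.v *)
Require Import Defs.
From HB Require Import structures.
From mathcomp Require Import all_boot all_order all_algebra.
From mathcomp Require Import boolp classical_sets reals.
From mathcomp Require Import ring.
Import Order.TTheory GRing.Theory Num.Theory.
Local Open Scope ring_scope.

Section Aux.
Variables (R : realType) (n : nat) (A : 'M[R]_n.+1).
Local Notation M p := (horner_mx A p).
Implicit Types (p q f : {poly R}) (u v w : 'cV[R]_n.+1).

Lemma horner_poly_sum k (E : nat -> R) :
  M (\poly_(i < k) E i) = \sum_(i < k) E i *: A ^+ i.
Proof.
rewrite poly_def raddf_sum; apply: eq_bigr => i _.
change (horner_mx A (E i *: 'X^i) = E i *: A ^+ i).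
by rewrite horner_mxZ rmorphXn /= horner_mx_X.
Qed.

Lemma hornerE p : M p = \sum_(i < size p) p`_i *: A ^+ i.
Proof. by rewrite -{1}[p]coefK horner_poly_sum. Qed.

Lemma poly_trunc f k : (size f <= k)%N -> \poly_(i < k) f`_i = f.
Proof.
move=> /leq_sizeP Hf; apply/polyP => i; rewrite coef_poly.
by case: ltnP => // /Hf ->.
Qed.

Lemma hornerE_le p k : (size p <= k)%N -> M p = \sum_(i < k) p`_i *: A ^+ i.
Proof. by move=> H; rewrite -{1}(poly_trunc p k H) horner_poly_sum. Qed.

Lemma polyappE p v : polyapp A p v = M p *m v.
Proof.
rewrite /polyapp hornerE mulmx_suml; apply: eq_bigr => i _.
by rewrite scalemxAl.
Qed.

Lemma dotvE u w : dotv u w = (u^T *m w) 0 0.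
Proof. by rewrite /dotv mxE; apply: eq_bigr => i _; rewrite mxE. Qed.

Lemma dotvC u w : dotv u w = dotv w u.
Proof. by rewrite /dotv; apply: eq_bigr => i _; rewrite mulrC. Qed.

Lemma dotvDr u w1 w2 : dotv u (w1 + w2) = dotv u w1 + dotv u w2.
Proof. by rewrite /dotv -big_split; apply: eq_bigr => i _; rewrite mxE mulrDr. Qed.

Lemma dotvZr u a w : dotv u (a *: w) = a * dotv u w.
Proof. by rewrite /dotv mulr_sumr; apply: eq_bigr => i _; rewrite mxE mulrCA. Qed.

Lemma dotvNr u w : dotv u (- w) = - dotv u w.
Proof. by rewrite -scaleN1r dotvZr mulN1r. Qed.

Lemma dotvZl u a w : dotv (a *: u) w = a * dotv u w.
Proof. by rewrite dotvC dotvZr dotvC. Qed.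

Lemma dotvDl u1 u2 w : dotv (u1 + u2) w = dotv u1 w + dotv u2 w.
Proof. by rewrite dotvC dotvDr !(dotvC w). Qed.

Lemma dotv0r u : dotv u 0 = 0.
Proof. by rewrite -(scale0r 0) dotvZr mul0r. Qed.

Lemma dotv_ge0 u : 0 <= dotv u u.
Proof. by rewrite /dotv; apply: sumr_ge0 => i _; rewrite -expr2 sqr_ge0. Qed.

Lemma dotv_eq0 u : dotv u u = 0 -> u = 0.
Proof.
move=> /eqP; rewrite /dotv psumr_eq0 => [/allP H|i _]; last by rewrite -expr2 sqr_ge0.
apply/matrixP => i j; rewrite (ord1 j) mxE.
have := H i (mem_index_enum _); rewrite -expr2 sqrf_eq0 => /eqP //.
Qed.

Hypothesis symA : A^T = A.

Lemma trmxXs k : (A ^+ k)^T = A ^+ k.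
Proof.
elim: k => [|k IH]; first by rewrite expr0 trmx1.
rewrite exprS -mulmxE trmx_mul IH symA mulmxE.
by rewrite -exprSr -exprS.
Qed.

Lemma trmx_horner p : (M p)^T = M p.
Proof.
rewrite hornerE linear_sum; apply: eq_bigr => i _.
by rewrite linearZ /= trmxXs.
Qed.

Lemma dotv_sym p u w : dotv (M p *m u) w = dotv u (M p *m w).
Proof. by rewrite !dotvE trmx_mul trmx_horner mulmxA. Qed.


Lemma krylov_comb s v (D : 'rV[R]_s) :
  (D *m krylov A s v)^T = M (rVpoly D) *m v.
Proof.
rewrite (hornerE_le (rVpoly D) s (size_poly _ _)) mulmx_sum_row linear_sum mulmx_suml.
apply: eq_bigr => i _; rewrite rowK linearZ /= trmxK coef_rVpoly_ord.
by rewrite scalemxAl.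
Qed.

Lemma krylovP s v w :
  (w^T <= krylov A s v)%MS <-> exists f, (size f <= s)%N /\ w = M f *m v.
Proof.
split.
  move=> /submxP [D HD]; exists (rVpoly D); split; first exact: size_poly.
  by rewrite -krylov_comb -HD trmxK.
move=> [f [Hs ->]]; apply/submxP; exists (poly_rV f).
by rewrite -[RHS]trmxK krylov_comb poly_rV_K.
Qed.

Lemma is_PsE s v p : is_Ps A s v p <->
  [/\ p \is monic, size p = s.+1 &
   forall f, (size f <= s)%N -> dotv (M f *m v) (M p *m v) = 0].
Proof.
rewrite /is_Ps; split.
  move=> [Hm [Hs H]]; split => // f Hf; rewrite -(polyappE p v); apply: H.
  by apply/krylovP; exists f.
move=> [Hm Hs H]; split => //; split => // w /krylovP [f [Hf ->]].
by rewrite polyappE; apply: H.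
Qed.

Lemma size_sub_le p q k : (size p <= k.+1)%N -> (size q <= k.+1)%N ->
  p`_k = q`_k -> (size (p - q)%R <= k)%N.
Proof.
move=> /leq_sizeP Hp /leq_sizeP Hq Hk; apply/leq_sizeP => j.
rewrite leq_eqVlt => /orP [/eqP <-|Hj]; first by rewrite coefB Hk subrr.
by rewrite coefB Hp // Hq // subrr.
Qed.

Lemma monic_coef_top p k : p \is monic -> size p = k.+1 -> p`_k = 1.
Proof. by move=> /monicP; rewrite /lead_coef => + Hs; rewrite Hs. Qed.

Lemma Ps_vec_uniq s v p q : is_Ps A s v p -> is_Ps A s v q ->
  M p *m v = M q *m v.
Proof.
move=> /is_PsE [Hp Hsp Hop] /is_PsE [Hq Hsq Hoq].
have Hs : (size (p - q)%R <= s)%N.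
  by apply: size_sub_le; rewrite ?Hsp ?Hsq // (monic_coef_top p s Hp Hsp) (monic_coef_top q s Hq Hsq).
apply/eqP; rewrite -subr_eq0; apply/eqP.
have E : M p *m v - M q *m v = M (p - q) *m v by rewrite rmorphB mulmxBl.
rewrite E; apply: dotv_eq0.
by rewrite {2}rmorphB mulmxBl dotvDr dotvNr Hop // Hoq // subrr.
Qed.

Lemma Ps_spec s v p : is_Ps A s v p -> is_Ps A s v (Ps A s v).
Proof.
move=> H; rewrite /Ps; case: xgetP => //= Hn; exfalso; exact: (Hn p H).
Qed.


Lemma grade_inj s v f : is_grade A v s.+1 -> (size f <= s.+1)%N ->
  M f *m v = 0 -> f = 0.
Proof.
move=> [_ Hmin] Hf H0; apply/eqP; apply: contraT => fn0.
have lc0 : lead_coef f != 0 by rewrite lead_coef_eq0.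
have Hm : ((lead_coef f)^-1 *: f) \is monic.
  by rewrite monicE lead_coefZ mulVf.
have := Hmin _ Hm; rewrite polyappE horner_mxZ -scalemxAl H0 scaler0.
move=> /(_ erefl); rewrite size_scale ?invr_eq0 //.
by move=> H; have := leq_trans H Hf; rewrite ltnn.
Qed.

Lemma Ps_exists s v : is_grade A v s.+1 -> exists q, is_Ps A s v q.
Proof.
move=> Hg.
pose K := krylov A s v.
pose G := K *m K^T.
have Gu : G \in unitmx.
  rewrite -row_free_unit; apply: inj_row_free => x Hx.
  pose z := (x *m K)^T.
  have z0 : z = 0.
    apply: dotv_eq0; rewrite dotvE /z trmxK trmx_mul mulmxA.
    by rewrite -[x *m K *m K^T]mulmxA -/G Hx mul0mx mxE.
  have : M (rVpoly x) *m v = 0 by rewrite -krylov_comb.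
  move=> /(grade_inj s v _ Hg) H.
  have /H : (size (rVpoly x) <= s.+1)%N by apply: leq_trans (size_poly _ _) _.
  by move=> Hx0; rewrite -[x]rVpolyK Hx0 linear0.
pose b := (A ^+ s *m v)^T *m K^T.
pose c := b *m invmx G.
pose q := 'X^s - rVpoly c.
have Hsz : (size (rVpoly c) < size ('X^s : {poly R}))%N.
  by rewrite size_polyXn ltnS size_poly.
exists q; apply/is_PsE; split.
- by rewrite monicE /q lead_coefDl ?size_polyN // lead_coefXn.
- by rewrite /q size_polyDl ?size_polyN // size_polyXn.
move=> f Hf.
have Hy : M q *m v = A ^+ s *m v - (c *m K)^T.
  by rewrite krylov_comb rmorphB /= rmorphXn /= horner_mx_X mulmxBl.
have Hw : (M f *m v)^T = poly_rV f *m K by rewrite -[RHS]trmxK krylov_comb poly_rV_K.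
rewrite dotvE Hw Hy -mulmxA.
have -> : K *m (A ^+ s *m v - (c *m K)^T) = 0.
  apply: trmx_inj; rewrite trmx_mul linearB /= trmxK trmx0 mulmxBl.
  by rewrite -/b -mulmxA -/G /c mulmxKV // subrr.
by rewrite mulmx0 mxE.
Qed.


Lemma dotv_norm1 v : normv v = 1 -> dotv v v = 1.
Proof. by move=> H; rewrite -(sqr_sqrtr (dotv_ge0 v)) -/(normv v) H expr1n. Qed.

Lemma normvZ k v : 0 <= k -> normv (k *: v) = k * normv v.
Proof.
move=> k0; rewrite /normv dotvZl dotvZr mulrA sqrtrM; last exact: mulr_ge0.
by rewrite -expr2 sqrtr_sqr ger0_norm.
Qed.

Lemma M_mul_app p q v : M p *m (M q *m v) = M (p * q) *m v.
Proof. by rewrite mulmxA rmorphM. Qed.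

Lemma two_step s v0 :
  normv v0 = 1 -> is_grade A v0 s.+1 ->
  let F := fun u => (normv (polyapp A (Ps A s u) u))^-1 *: polyapp A (Ps A s u) u in
  F (F v0) = v0.
Proof.
move=> Hn Hg F.
have d00 := dotv_norm1 _ Hn.
have [[m [Hmm [Hsm Hm0]]] _] := Hg.
rewrite polyappE in Hm0.
have mn0 : m != 0 by rewrite -size_poly_eq0 Hsm.
have [q0 Hq0] := Ps_exists s v0 Hg.
have HPs := Ps_spec _ _ _ Hq0.
set q := Ps A s v0 in HPs.
have /is_PsE [Hqm Hsq Hqo] := HPs.
pose t1 := M q *m v0.
have orth1 : forall f, (size f <= s)%N -> dotv (M f *m v0) t1 = 0 by [].
have t1n0 : t1 != 0.
  apply/eqP => /(grade_inj s v0 q Hg); rewrite Hsq => /(_ (leqnn _)) /eqP.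
  by rewrite -size_poly_eq0 Hsq.
have t1pos : 0 < dotv t1 t1.
  rewrite lt0r dotv_ge0 andbT; apply/eqP => /dotv_eq0/eqP; exact/negP.
have cop : coprimep q m.
  apply: contraT => ncop.
  pose g := gcdp q m.
  have gn0 : g != 0 by rewrite gcdp_eq0 negb_and mn0 orbT.
  have Hsg : (1 < size g)%N.
    move: ncop; rewrite /coprimep -/g ltn_neqAle eq_sym => -> /=.
    by rewrite lt0n size_poly_eq0.
  pose h := m %/ g.
  have Hhg : h * g = m by rewrite divpK // dvdp_gcdr.
  have Hqg : q %/ g * g = q by rewrite divpK // dvdp_gcdl.
  have hn0 : h != 0 by apply: contraNneq mn0 => h0; rewrite -Hhg h0 mul0r.
  have Hsh : (size h <= s.+1)%N.
    have := size_mul hn0 gn0; rewrite Hhg Hsm => E.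
    move: Hsg E; case: (size g) => [|[|k]] //= _; rewrite !addnS /= => [[->]].
    by rewrite leq_addr.
  have orth2 : forall f, (size f <= s.+1)%N -> dotv (M f *m v0) t1 = 0.
    move=> f Hf; rewrite (divp_eq f h) rmorphD mulmxDl dotvC dotvDr.
    rewrite [X in _ + X]dotvC orth1; last first.
      by rewrite -ltnS; apply: leq_trans Hsh; rewrite ltn_modp.
    rewrite addr0 /t1 dotvC dotv_sym M_mul_app.
    have -> : f %/ h * h * q = f %/ h * (q %/ g) * m.
      by rewrite -{1}Hqg -Hhg; ring.
    by rewrite -M_mul_app Hm0 mulmx0 dotv0r.
  have := orth2 q; rewrite Hsq => /(_ (leqnn _)) /dotv_eq0 /eqP.
  by rewrite (negbTE t1n0).
have [[u1 u2] /= Hb] := Bezout_coprimepP _ _ cop.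
move: Hb; rewrite -size_poly_eq1 => /size_poly1P [c cn0 Hc].
pose r0 := u1 %% m.
have Hr0 : M r0 *m t1 = c *: v0.
  have E1 : M u1 *m t1 = c *: v0.
    rewrite /t1 M_mul_app.
    have -> : u1 * q = c%:P - u2 * m by rewrite -Hc addrK.
    by rewrite rmorphB /= mulmxBl horner_mx_C mul_scalar_mx -M_mul_app Hm0 mulmx0 subr0.
  have E2 : M (u1 %/ m * m) *m t1 = 0.
    rewrite /t1 M_mul_app.
    have -> : u1 %/ m * m * q = u1 %/ m * q * m by ring.
    by rewrite -M_mul_app Hm0 mulmx0.
  have -> : r0 = u1 - u1 %/ m * m.
    by apply/eqP; rewrite eq_sym subr_eq addrC /r0 -divp_eq.
  by rewrite rmorphB mulmxBl E1 E2 subr0.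
have Hsr0 : size r0 = s.+1.
  have : (size r0 < s.+2)%N by rewrite -Hsm ltn_modp.
  rewrite ltnS leq_eqVlt => /orP [/eqP //|Hlt]; exfalso.
  have := orth1 r0 Hlt; rewrite dotvC -dotv_sym Hr0 dotvZl d00 mulr1.
  by move/eqP; rewrite (negbTE cn0).
pose l := lead_coef r0.
have ln0 : l != 0 by rewrite lead_coef_eq0 -size_poly_eq0 Hsr0.
pose r := l^-1 *: r0.
have Hrm : r \is monic by rewrite monicE lead_coefZ mulVf.
have Hsr : size r = s.+1 by rewrite size_scale ?invr_eq0.
pose k0 := l^-1 * c.
have Hr : M r *m t1 = k0 *: v0 by rewrite horner_mxZ -scalemxAl Hr0 scalerA.
have k0pos : 0 < k0.
  have : dotv (M r *m t1) v0 = dotv t1 t1.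
    rewrite dotv_sym dotvC.
    have -> : r = (r - q) + q by rewrite subrK.
    rewrite rmorphD mulmxDl dotvDl orth1 ?add0r //.
    by apply: size_sub_le; rewrite ?Hsr ?Hsq // (monic_coef_top r s Hrm Hsr) (monic_coef_top q s Hqm Hsq).
  by rewrite Hr dotvZl d00 mulr1 => ->.
pose nt := normv t1.
have ntpos : 0 < nt by rewrite /nt /normv sqrtr_gt0.
have Ht1 : polyapp A (Ps A s v0) v0 = t1 by rewrite polyappE.
have -> : F v0 = nt^-1 *: t1 by rewrite /F Ht1.
pose v1 := nt^-1 *: t1.
have Hr1 : is_Ps A s v1 r.
  apply/is_PsE; split => // f Hf.
  rewrite /v1 -!scalemxAr dotvZl dotvZr Hr dotvZr dotv_sym dotvC orth1 //.
  by rewrite !mulr0.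
have HPs1 := Ps_spec _ _ _ Hr1.
rewrite /F polyappE (Ps_vec_uniq _ _ _ _ HPs1 Hr1).
have kpos : 0 < nt^-1 * k0 by rewrite mulr_gt0 // invr_gt0.
have -> : M r *m v1 = (nt^-1 * k0) *: v0 by rewrite /v1 -scalemxAr Hr scalerA.
rewrite normvZ ?ltW // Hn mulr1 scalerA mulVf ?scale1r //.
by rewrite gt_eqF.
Qed.

End Aux.

Theorem theorem4p1 (R : realType) (n : nat) (A : 'M[R]_n) (s : nat)
    (v0 : 'cV[R]_n) :
  A^T = A ->
  (1 <= s)%N ->
  (exists d, is_minpoly_deg A d /\ (s < d)%N) ->
  normv v0 = 1 ->
  is_grade A v0 s.+1 ->
  forall k : nat, iterv A s v0 (2 * k) = v0.
Proof.
case: n A v0 => [|n] A v0 symA _ _ Hn Hg.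
  exfalso; move: Hn; rewrite /normv /dotv big_ord0 sqrtr0 => /eqP.
  by rewrite eq_sym oner_eq0.
elim=> [|k IH]; first by rewrite muln0.
have -> : (2 * k.+1 = (2 * k).+2)%N by rewrite mulnS.
rewrite /= IH. exact: (two_step _ _ _ symA s v0 Hn Hg).
Qed.
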